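(* Let $R$ be a Noetherian ring and let $\mathfrak p$ be a prime ideal of $R$ with $|R/\mathfrak p|_r=|R|_r$. Let $M$ be a finitely generated critical right $R$-module with $|M|_r=|R|_r$ and $\operatorname{Ass}(M)=\{\mathfrak p\}$, and let $I=r(M)$ be its right annihilator. Then: (i) $I\subseteq\mathfrak p$; (ii) $R/I$ is a right Krull homogeneous ring with $|R/I|_r=|R|_r$; (iii) $R/I$ is a $\mathfrak p/I$-primary ring (as a right module over itself its only associated prime is $\mathfrak p/I$), $\mathfrak p/I$ is a non-essential right ideal of $R/I$, and $R/I$ satisfies the right large condition; (iv) either $I=\mathfrak p$, or there exists an ideal $J\neq\mathfrak p$ of $R$ with $I\subsetneq J$, $J\mathfrak p\subseteq I$ and $|R/J|_r<|R|_r$.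
   Context: Rings are associative with identity; ''Noetherian'' means left and right Noetherian. $|M|_r$ denotes the Krull dimension of a right $R$-module $M$. A right module $M$ is critical if $|M/M'|_r<|M|_r$ for every nonzero submodule $M'$ of $M$. $\operatorname{Ass}(M)$ is the set of prime ideals associated to $M$ (primes $\mathfrak q$ equal to the annihilator of some nonzero submodule $M'$ with $\mathfrak q$ the annihilator of every nonzero submodule of $M'$). A ring $S$ is right Krull homogeneous if every nonzero right ideal $K$ of $S$ has $|K|_r=|S|_r$. A Noetherian ring $S$ satisfies the right large condition if $|S/J|_r<|S|_r$ for every essential right ideal $J$ of $S$. *)

(* Defs.v *)
(* Right R-modules over a (not necessarily commutative) ring R
   are left modules over the converse ring R^c. *)
From HB Require Import structures.
From mathcomp Require Import all_boot all_order all_algebra.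
Set Implicit Arguments.
Unset Strict Implicit.
Unset Printing Implicit Defensive.
Import GRing.Theory.
Local Open Scope ring_scope.

Definition subS (T : Type) (A B : T -> Prop) := forall x, A x -> B x.
Definition eqS (T : Type) (A B : T -> Prop) := forall x, A x <-> B x.
Definition fullS (T : Type) : T -> Prop := fun _ => True.

(* ---------- ordinals as Brouwer trees (with arbitrary limits) ---------- *)
Inductive ord : Type :=
| OZ : ord
| OS : ord -> ord
| OL : forall J : Type, (J -> ord) -> ord.

(* link the universe of limit indices to (subsets of) ring / module carriers *)
Definition ord_univ_ring (R : nzRingType) : ord := OL (fun _ : R -> Prop => OZ).
Definition ord_univ_mod (R : nzRingType) (M : lmodType R^c) : ord :=
  OL (fun _ : M -> Prop => OZ).

(* ---------- deviation (Krull dimension) of an interval [b, a] in a lattice of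
   subobjects, the subobjects of a type T being given by a predicate Sub ---- *)
Section Deviation.
Variables (T : Type) (Sub : (T -> Prop) -> Prop).

Definition dchain (b a : T -> Prop) (c : nat -> T -> Prop) :=
  forall i, Sub (c i) /\ subS b (c i) /\ subS (c i) a /\ subS (c i.+1) (c i).

(* devlt b a o  <->  dev [b, a] < o, where the trivial interval has
   deviation -1; recursion following Gabriel-Rentschler:
   dev <= o  iff every descending chain has all but finitely many factors of
   deviation < o. *)
Fixpoint devlt (b a : T -> Prop) (o : ord) : Prop :=
  match o with
  | OZ => subS a b
  | OS o' => subS a b \/
      forall c, dchain b a c ->
        exists n, forall i, (n <= i)%N -> devlt (c i.+1) (c i) o'
  | OL J f => subS a b \/ exists i : J, devlt b a (f i)
  end.
End Deviation.

Definition kdim_le (T1 T2 : Type) (S1 : (T1 -> Prop) -> Prop)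
  (b1 a1 : T1 -> Prop) (S2 : (T2 -> Prop) -> Prop) (b2 a2 : T2 -> Prop) :=
  forall o, devlt S2 b2 a2 o -> devlt S1 b1 a1 o.
Definition kdim_lt (T1 T2 : Type) (S1 : (T1 -> Prop) -> Prop)
  (b1 a1 : T1 -> Prop) (S2 : (T2 -> Prop) -> Prop) (b2 a2 : T2 -> Prop) :=
  exists o, devlt S1 b1 a1 o /\ ~ devlt S2 b2 a2 o.
Definition kdim_eq (T1 T2 : Type) (S1 : (T1 -> Prop) -> Prop)
  (b1 a1 : T1 -> Prop) (S2 : (T2 -> Prop) -> Prop) (b2 a2 : T2 -> Prop) :=
  kdim_le S1 b1 a1 S2 b2 a2 /\ kdim_le S2 b2 a2 S1 b1 a1.

Section Ideals.
Variable R : nzRingType.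

Definition zeroS : R -> Prop := fun x => x = 0.

Definition addsubgrp (A : R -> Prop) :=
  A 0 /\ (forall x y, A x -> A y -> A (x - y)).
Definition right_ideal (A : R -> Prop) :=
  addsubgrp A /\ forall x r, A x -> A (x * r).
Definition left_ideal (A : R -> Prop) :=
  addsubgrp A /\ forall x r, A x -> A (r * x).
Definition ideal (A : R -> Prop) := right_ideal A /\ left_ideal A.

Definition prime_ideal (P : R -> Prop) :=
  ideal P /\ ~ P 1 /\
  forall A B, ideal A -> ideal B ->
    (forall a b, A a -> B b -> P (a * b)) -> subS A P \/ subS B P.

Definition noetherian :=
  (forall c : nat -> R -> Prop, (forall i, right_ideal (c i)) ->
     (forall i, subS (c i) (c i.+1)) ->
     exists n, forall m, (n <= m)%N -> subS (c m) (c n)) /\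
  (forall c : nat -> R -> Prop, (forall i, left_ideal (c i)) ->
     (forall i, subS (c i) (c i.+1)) ->
     exists n, forall m, (n <= m)%N -> subS (c m) (c n)).

(* ---------- notions for the factor ring S = R/I, transported to R via the
   correspondence between right ideals of R/I and right ideals of R
   containing I ---------- *)

(* K/I is a nonzero right ideal of R/I *)
Definition nz_right_ideal_over (I K : R -> Prop) :=
  right_ideal K /\ subS I K /\ ~ subS K I.

Definition essential_over (I J : R -> Prop) :=
  right_ideal J /\ subS I J /\
  forall K, nz_right_ideal_over I K -> ~ subS (fun x => K x /\ J x) I.

Definition right_krull_homogeneous_quot (I : R -> Prop) :=
  forall K, nz_right_ideal_over I K ->
    kdim_eq right_ideal I K right_ideal I (@fullS R).

Definition right_large_quot (I : R -> Prop) :=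
  forall J, essential_over I J ->
    kdim_lt right_ideal J (@fullS R) right_ideal I (@fullS R).

(* right annihilator in R/I of the right ideal N/I (of R/I), pulled back to R *)
Definition ann_quot (I N : R -> Prop) : R -> Prop :=
  fun r => forall n, N n -> I (n * r).

(* Q/I is an associated prime of the right (R/I)-module R/I *)
Definition assoc_quot (I Q : R -> Prop) :=
  prime_ideal Q /\ subS I Q /\
  exists N, nz_right_ideal_over I N /\ eqS (ann_quot I N) Q /\
    forall N', nz_right_ideal_over I N' -> subS N' N -> eqS (ann_quot I N') Q.
End Ideals.

Section Modules.
Variables (R : nzRingType) (M : lmodType R^c).

Definition ract (m : M) (r : R) : M := (r : R^c) *: m.

Definition submod (N : M -> Prop) :=
  N 0 /\ (forall x y, N x -> N y -> N (x - y)) /\ (forall x r, N x -> N (ract x r)).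

Definition zeroM : M -> Prop := fun x => x = 0.

Definition nonzero_submod (N : M -> Prop) := submod N /\ exists x, N x /\ x <> 0.

Definition fin_gen :=
  exists n (g : 'I_n -> M), forall m, exists r : 'I_n -> R,
    m = \sum_(i < n) ract (g i) (r i).

Definition critical :=
  forall N, nonzero_submod N ->
    kdim_lt submod N (@fullS M) submod zeroM (@fullS M).

Definition ann (N : M -> Prop) : R -> Prop := fun r => forall m, N m -> ract m r = 0.

Definition assoc_prime (Q : R -> Prop) :=
  prime_ideal Q /\
  exists N, nonzero_submod N /\ eqS (ann N) Q /\
    forall N', nonzero_submod N' -> subS N' N -> eqS (ann N') Q.
End Modules.

(* Main.v *)
Require Import Defs.
From mathcomp Require Import all_boot all_order all_algebra.
Local Open Scope ring_scope.
From Stdlib Require Import Classical ClassicalEpsilon FunctionalExtensionality PropExtensionality.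
Import GRing.Theory.

Fixpoint ole (x y : ord) {struct x} : Prop :=
  match x with
  | OZ => True
  | OS x' => (fix lt' (y : ord) : Prop :=
               match y with OZ => False | OS y' => ole x' y'
                          | OL _ g => exists j, lt' (g j) end) y
  | OL _ f => forall i, ole (f i) y
  end.

Fixpoint olt (x y : ord) {struct y} : Prop :=
  match y with OZ => False | OS y' => ole x y' | OL _ g => exists j, olt x (g j) end.

Lemma ole_S x y : ole (OS x) y <-> olt x y.
Proof.
induction y as [| y IH | J g IH]; simpl; try tauto.
split; intros [j Hj]; exists j; apply IH; exact Hj.
Qed.

Lemma ord_tot : forall x y, (ole x y \/ olt y x) /\ (olt x y \/ ole y x).
Proof.
induction x as [| x IHx | J f IHf].
- intro y; split; [left; exact I|].
  induction y as [| y _ | K g IHg].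
  + right; exact I.
  + left; exact I.
  + destruct (classic (exists j, olt OZ (g j))) as [H|H].
    * left; exact H.
    * right; simpl; intro j.
      destruct (IHg j) as [H'|H']; [exfalso; apply H; exists j; exact H'| exact H'].
- intro y; split.
  + destruct (IHx y) as [_ [H|H]]; [left; apply ole_S; exact H| right; exact H].
  + induction y as [| y _ | K g IHg].
    * right; exact I.
    * destruct (IHx y) as [_ [H|H]].
      -- left; simpl; apply ole_S; exact H.
      -- right; apply ole_S; exact H.
    * destruct (classic (exists j, olt (OS x) (g j))) as [H|H].
      -- left; exact H.
      -- right; simpl; intro j.
         destruct (IHg j) as [H'|H']; [exfalso; apply H; exists j; exact H'| exact H'].
- assert (P1 : forall y, ole (OL f) y \/ olt y (OL f)).
  { intro y. destruct (classic (exists i, olt y (f i))) as [H|H].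
    - right; exact H.
    - left; simpl; intro i. destruct (IHf i y) as [[H'|H'] _]; [exact H'|].
      exfalso; apply H; exists i; exact H'. }
  intro y; split; [apply P1|].
  induction y as [| y _ | K g IHg].
  + right; exact I.
  + destruct (P1 y) as [H|H]; [left; exact H| right; apply ole_S; exact H].
  + destruct (classic (exists j, olt (OL f) (g j))) as [H|H].
    * left; exact H.
    * right; simpl; intro j.
      destruct (IHg j) as [H'|H']; [exfalso; apply H; exists j; exact H'| exact H'].
Qed.

Section Gen.
Variables (T : Type) (Sub : (T -> Prop) -> Prop).

Lemma devlt_triv b a o : subS a b -> devlt Sub b a o.
Proof. destruct o; simpl; auto. Qed.

Lemma devlt_sub o : forall b a b' a', devlt Sub b a o -> subS b b' -> subS a' a ->
  devlt Sub b' a' o.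
Proof.
induction o as [| o IH | J f IH]; intros b a b' a' H Hb Ha; simpl in *.
- intros x Hx; auto.
- destruct H as [H|H]; [left; intros x Hx; auto|right].
  intros c Hc. apply H. intro i. destruct (Hc i) as [H1 [H2 [H3 H4]]].
  split; [exact H1| split; [intros x Hx; auto| split; [intros x Hx; auto| exact H4]]].
- destruct H as [H|[i H]]; [left; intros x Hx; auto|right].
  exists i; eapply IH; eauto.
Qed.

Lemma devlt_up b a o : devlt Sub b a o -> devlt Sub b a (OS o).
Proof.
intro H; simpl; right; intros c Hc; exists 0%N; intros i _.
destruct (Hc i) as [_ [_ [H3 _]]]; destruct (Hc i.+1) as [_ [H2 _]].
eapply devlt_sub; eauto.
Qed.

Lemma devlt_mono x : forall y, ole x y -> forall b a, devlt Sub b a x -> devlt Sub b a y.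
Proof.
induction x as [| x IHx | J f IHf]; intros y Hxy b a H.
- apply devlt_triv; exact H.
- apply ole_S in Hxy. revert Hxy.
  induction y as [| y _ | K g IHg]; intro Hxy; simpl in Hxy.
  + contradiction.
  + simpl in H |- *. destruct H as [H|H]; [left; exact H| right].
    intros c Hc. destruct (H c Hc) as [n Hn]. exists n. intros i Hi.
    apply (IHx y Hxy). apply Hn; exact Hi.
  + destruct Hxy as [j Hj]. simpl.
    right; exists j; apply IHg; exact Hj.
- simpl in H, Hxy. destruct H as [H|[i H]]; [apply devlt_triv; exact H|].
  apply (IHf i); auto.
Qed.

Lemma devlt_mono_lt x y b a : olt x y -> devlt Sub b a x -> devlt Sub b a y.
Proof.
intros H1 H2. apply (devlt_mono (OS x)); [apply ole_S; exact H1| apply devlt_up; exact H2].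
Qed.

End Gen.

Lemma devlt_embed T1 T2 (S1 : (T1->Prop)->Prop) (S2 : (T2->Prop)->Prop)
  (phi : (T1->Prop)->(T2->Prop)) (lo hi : T1 -> Prop)
 (Hs : forall x, S1 x -> subS lo x -> subS x hi -> S2 (phi x))
 (Hm : forall x y, S1 x -> S1 y -> subS lo x -> subS x hi -> subS lo y -> subS y hi ->
        subS x y -> subS (phi x) (phi y))
 (Hr : forall x y, S1 x -> S1 y -> subS lo x -> subS x hi -> subS lo y -> subS y hi ->
        subS (phi x) (phi y) -> subS x y) :
 forall o x y, S1 x -> S1 y -> subS lo y -> subS y x -> subS x hi ->
   devlt S2 (phi y) (phi x) o -> devlt S1 y x o.
Proof.
assert (Hlx : forall x y, subS y x -> subS lo y -> subS lo x).
{ intros x y H1 H2 z Hz; auto. }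
assert (Hyh : forall x y, subS y x -> subS x hi -> subS y hi).
{ intros x y H1 H2 z Hz; auto. }
induction o as [| o IH | J f IH]; intros x y Sx Sy Hly Hyx Hxh H; simpl in *.
- eapply Hr; eauto.
- destruct H as [H|H]; [left; eapply Hr; eauto|right].
  intros c Hc.
  assert (Hc' : forall i, S1 (c i) /\ subS lo (c i) /\ subS (c i) hi).
  { intro i; destruct (Hc i) as [H1 [H2 [H3 _]]].
    split; [exact H1| split; [eapply Hlx; eauto| eapply Hyh; eauto]]. }
  destruct (H (fun i => phi (c i))) as [n Hn].
  { intro i; destruct (Hc i) as [H1 [H2 [H3 H4]]].
    destruct (Hc' i) as [_ [L1 L2]]; destruct (Hc' i.+1) as [C1 [C2 C3]].
    split; [apply Hs; auto|].
    split; [apply Hm; eauto|].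
    split; [apply Hm; eauto| apply Hm; eauto]. }
  exists n; intros i Hi.
  destruct (Hc' i) as [A1 [A2 A3]]; destruct (Hc' i.+1) as [B1 [B2 B3]].
  destruct (Hc i) as [_ [_ [_ H4]]].
  apply IH; auto.
- destruct H as [H|[i H]]; [left; eapply Hr; eauto|right].
  exists i; apply IH; auto.
Qed.

Definition mt {T : Type} (x y : T -> Prop) : T -> Prop := fun z => x z /\ y z.

Section Comb.
Variables (T : Type) (Sub : (T -> Prop) -> Prop) (jn : (T->Prop) -> (T->Prop) -> (T -> Prop)).
Hypothesis HI : forall x y, Sub x -> Sub y -> Sub (mt x y).
Hypothesis HJ : forall x y, Sub x -> Sub y -> Sub (jn x y).
Hypothesis HJl : forall x y, Sub y -> subS x (jn x y).
Hypothesis HJr : forall x y, Sub x -> subS y (jn x y).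
Hypothesis HJlub : forall x y z, Sub z -> subS x z -> subS y z -> subS (jn x y) z.
Hypothesis Hmod : forall u v w, Sub u -> Sub v -> Sub w -> subS u w ->
  subS (mt w (jn u v)) (jn u (mt w v)).

Lemma devlt_comb o : forall a b c, Sub a -> Sub b -> Sub c -> subS a b -> subS b c ->
  devlt Sub a b o -> devlt Sub b c o -> devlt Sub a c o.
Proof.
induction o as [| o IH | J f IH]; intros a b c Sa Sb Sc Hab Hbc H1 H2.
- simpl in *. intros z Hz; auto.
- assert (E1 := H1); assert (E2 := H2).
  destruct H1 as [H1|H1]; [eapply devlt_sub; [exact E2| exact H1| intros z Hz; exact Hz]|].
  destruct H2 as [H2|H2]; [eapply devlt_sub; [exact E1| intros z Hz; exact Hz| exact H2]|].
  right. intros d Hd.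
  destruct (H1 (fun i => mt (d i) b)) as [n1 Hn1].
  { intro i; destruct (Hd i) as [D1 [D2 [D3 D4]]]. split; [apply HI; auto|].
    split; [intros z Hz; split; auto|]. split; [intros z [Hz1 Hz2]; exact Hz2|].
    intros z [Hz1 Hz2]; split; auto. }
  destruct (H2 (fun i => jn (d i) b)) as [n2 Hn2].
  { intro i; destruct (Hd i) as [D1 [D2 [D3 D4]]]. destruct (Hd i.+1) as [C1 [C2 [C3 C4]]].
    split; [apply HJ; auto|].
    split; [apply HJr; auto|]. split; [apply HJlub; auto|].
    apply HJlub; auto. intros z Hz. apply HJl; auto. }
  exists (maxn n1 n2). intros i Hi.
  have Hi1 : (n1 <= i)%N by apply: leq_trans Hi; apply: leq_maxl.
  have Hi2 : (n2 <= i)%N by apply: leq_trans Hi; apply: leq_maxr.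
  destruct (Hd i) as [D1 [D2 [D3 D4]]]. destruct (Hd i.+1) as [C1 [C2 [C3 C4]]].
  set m := jn (d i.+1) (mt (d i) b).
  have Sm : Sub m by apply HJ; auto.
  have L1 : subS (d i.+1) m.
  { apply HJl; apply HI; auto. }
  have L2 : subS m (d i).
  { apply HJlub; auto. intros z [Hz _]; exact Hz. }
  apply (IH (d i.+1) m (d i)); auto.
  + refine (@devlt_embed T T Sub Sub (fun x => mt x b) (d i.+1) m _ _ _ o m (d i.+1) Sm C1 _ L1 _ _).
    * intros x Sx _ _; apply HI; auto.
    * intros x y Sx Sy _ _ _ _ Hxy z [Hz1 Hz2]; split; auto.
    * intros x y Sx Sy Hlx Hxh Hly Hyh Hxy z Hz.
      have Hz' : jn (d i.+1) (mt x (mt (d i) b)) z.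
      { apply (Hmod (d i.+1) (mt (d i) b) x); auto. split; [exact Hz| apply Hxh; exact Hz]. }
      revert Hz'. apply HJlub; auto.
      intros w [Hw1 [Hw2 Hw3]]. apply (proj1 (Hxy w (conj Hw1 Hw3))).
    * intros z Hz; exact Hz.
    * intros z Hz; exact Hz.
    * cbv beta. refine (devlt_sub _ _ _ _ _ _ _ (Hn1 i Hi1) _ _); [intros z Hz; exact Hz|].
      intros z [Hz1 Hz2]; split; auto.
  + refine (@devlt_embed T T Sub Sub (fun x => jn x b) m (d i) _ _ _ o (d i) m D1 Sm _ L2 _ _).
    * intros x Sx _ _; apply HJ; auto.
    * intros x y Sx Sy _ _ _ _ Hxy. apply HJlub; auto.
      intros z Hz; apply HJl; auto.
    * intros x y Sx Sy Hlx Hxh Hly Hyh Hxy z Hz.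
      have Hz' : jn y (mt (d i) b) z.
      { apply (Hmod y b (d i)); auto. split; [apply Hxh; exact Hz|]. apply Hxy. apply HJl; auto. }
      revert Hz'. apply HJlub; [exact Sy| intros w Hw; exact Hw|].
      intros w Hw. apply Hly. apply HJr; auto.
    * intros z Hz; exact Hz.
    * intros z Hz; exact Hz.
    * cbv beta. refine (devlt_sub _ _ _ _ _ _ _ (Hn2 i Hi2) _ _); [|intros z Hz; exact Hz].
      apply HJlub; auto. intros z Hz; apply HJl; auto.
- assert (E1 := H1); assert (E2 := H2).
  destruct H1 as [H1|[i H1]]; [eapply devlt_sub; [exact E2| exact H1| intros z Hz; exact Hz]|].
  destruct H2 as [H2|[j H2]]; [eapply devlt_sub; [exact E1| intros z Hz; exact Hz| exact H2]|].
  right. destruct (ord_tot (f i) (f j)) as [[H|H] _].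
  + exists j. apply (IH j a b c); auto. eapply devlt_mono; eauto.
  + exists i. apply (IH i a b c); auto. eapply devlt_mono_lt; eauto.
Qed.

End Comb.

Section RingLat.
Set Implicit Arguments.
Unset Strict Implicit.
Variables (R : nzRingType) (M : lmodType R^c).

Lemma ract_mul (m : M) (a b : R) : ract (ract m a) b = ract m (a * b).
Proof. rewrite /ract scalerA. reflexivity. Qed.
Lemma ract_r0 (m : M) : ract m 0 = 0.
Proof. by rewrite /ract scale0r. Qed.
Lemma ract_0r (r : R) : ract (0 : M) r = 0.
Proof. by rewrite /ract scaler0. Qed.
Lemma ract_rB (m : M) x y : ract m (x - y) = ract m x - ract m y.
Proof. by rewrite /ract scalerBl. Qed.
Lemma ract_rD (m : M) x y : ract m (x + y) = ract m x + ract m y.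
Proof. by rewrite /ract scalerDl. Qed.
Lemma ract_Br (m n : M) r : ract (m - n) r = ract m r - ract n r.
Proof. by rewrite /ract scalerBr. Qed.
Lemma ract_Dr (m n : M) r : ract (m + n) r = ract m r + ract n r.
Proof. by rewrite /ract scalerDr. Qed.
Lemma ract_r1 (m : M) : ract m 1 = m.
Proof. by rewrite /ract scale1r. Qed.

Lemma ri_add (A : R -> Prop) x y : right_ideal A -> A x -> A y -> A (x + y).
Proof.
move=> [[H0 HB] _] Hx Hy. have := HB x (0 - y) Hx (HB _ _ H0 Hy).
by rewrite sub0r opprK.
Qed.
Lemma ri_opp (A : R -> Prop) y : right_ideal A -> A y -> A (- y).
Proof. move=> [[H0 HB] _] Hy. have := HB _ _ H0 Hy. by rewrite sub0r. Qed.
Lemma ri_0 (A : R -> Prop) : right_ideal A -> A 0.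
Proof. by move=> [[H0 _] _]. Qed.
Lemma ri_B (A : R -> Prop) x y : right_ideal A -> A x -> A y -> A (x - y).
Proof. by move=> [[_ HB] _]; apply HB. Qed.
Lemma ri_M (A : R -> Prop) x r : right_ideal A -> A x -> A (x * r).
Proof. by move=> [_ HM]; apply HM. Qed.

Lemma sm_add (A : M -> Prop) x y : submod A -> A x -> A y -> A (x + y).
Proof.
move=> [H0 [HB _]] Hx Hy. have := HB x (0 - y) Hx (HB _ _ H0 Hy).
by rewrite sub0r opprK.
Qed.
Lemma sm_0 (A : M -> Prop) : submod A -> A 0.
Proof. by move=> [H0 _]. Qed.
Lemma sm_B (A : M -> Prop) x y : submod A -> A x -> A y -> A (x - y).
Proof. by move=> [_ [HB _]]; apply HB. Qed.
Lemma sm_M (A : M -> Prop) x r : submod A -> A x -> A (ract x r).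
Proof. by move=> [_ [_ HM]]; apply HM. Qed.

Definition jnR (x y : R -> Prop) : R -> Prop := fun z => exists u v, x u /\ y v /\ z = u + v.
Definition jnM (x y : M -> Prop) : M -> Prop := fun z => exists u v, x u /\ y v /\ z = u + v.

Lemma RI_I (x y : R -> Prop) : right_ideal x -> right_ideal y -> right_ideal (mt x y).
Proof.
move=> Hx Hy; split; [split|].
- by split; apply ri_0.
- by move=> a b [? ?] [? ?]; split; apply ri_B.
- by move=> a r [? ?]; split; apply ri_M.
Qed.
Lemma RI_J (x y : R -> Prop) : right_ideal x -> right_ideal y -> right_ideal (jnR x y).
Proof.
move=> Hx Hy; split; [split|].
- exists 0, 0; split; [apply ri_0|split; [apply ri_0|]] => //; by rewrite addr0.
- move=> a b [u [v [Hu [Hv ->]]]] [u' [v' [Hu' [Hv' ->]]]].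
  exists (u - u'), (v - v'); split; [apply ri_B|split; [apply ri_B|]] => //.
  by rewrite opprD addrACA.
- move=> a r [u [v [Hu [Hv ->]]]]. exists (u * r), (v * r).
  split; [apply ri_M|split; [apply ri_M|]] => //. by rewrite mulrDl.
Qed.
Lemma RI_Jl (x y : R -> Prop) : right_ideal y -> subS x (jnR x y).
Proof. move=> Hy z Hz; exists z, 0; split => //; split; [apply ri_0|] => //; by rewrite addr0. Qed.
Lemma RI_Jr (x y : R -> Prop) : right_ideal x -> subS y (jnR x y).
Proof. move=> Hx z Hz; exists 0, z; split; [apply ri_0|split] => //; by rewrite add0r. Qed.
Lemma RI_lub (x y z : R -> Prop) : right_ideal z -> subS x z -> subS y z -> subS (jnR x y) z.
Proof. move=> Hz Hx Hy w [u [v [Hu [Hv ->]]]]; apply ri_add; auto. Qed.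
Lemma RI_mod (u v w : R -> Prop) : right_ideal u -> right_ideal v -> right_ideal w -> subS u w ->
  subS (mt w (jnR u v)) (jnR u (mt w v)).
Proof.
move=> Hu Hv Hw Huw z [Hz [a [b [Ha [Hb Ez]]]]].
exists a, b; split => //; split => //; split => //.
have -> : b = z - a by rewrite Ez addrC addKr.
by apply ri_B; auto.
Qed.

Lemma SM_I (x y : M -> Prop) : submod x -> submod y -> submod (mt x y).
Proof.
move=> Hx Hy; rewrite /submod /mt; split; [|split].
- split; [exact (sm_0 Hx)| exact (sm_0 Hy)].
- by move=> a b [? ?] [? ?]; split; apply sm_B.
- by move=> a r [? ?]; split; apply sm_M.
Qed.
Lemma SM_J (x y : M -> Prop) : submod x -> submod y -> submod (jnM x y).
Proof.
move=> Hx Hy; rewrite /submod; split; [|split].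
- exists 0, 0; split; [apply sm_0|split; [apply sm_0|]] => //; by rewrite addr0.
- move=> a b [u [v [Hu [Hv ->]]]] [u' [v' [Hu' [Hv' ->]]]].
  exists (u - u'), (v - v'); split; [apply sm_B|split; [apply sm_B|]] => //.
  by rewrite opprD addrACA.
- move=> a r [u [v [Hu [Hv ->]]]]. exists (ract u r), (ract v r).
  split; [apply sm_M|split; [apply sm_M|]] => //. by rewrite ract_Dr.
Qed.
Lemma SM_Jl (x y : M -> Prop) : submod y -> subS x (jnM x y).
Proof. move=> Hy z Hz; exists z, 0; split => //; split; [apply sm_0|] => //; by rewrite addr0. Qed.
Lemma SM_Jr (x y : M -> Prop) : submod x -> subS y (jnM x y).
Proof. move=> Hx z Hz; exists 0, z; split; [apply sm_0|split] => //; by rewrite add0r. Qed.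
Lemma SM_lub (x y z : M -> Prop) : submod z -> subS x z -> subS y z -> subS (jnM x y) z.
Proof. move=> Hz Hx Hy w [u [v [Hu [Hv ->]]]]; apply sm_add; auto. Qed.
Lemma SM_mod (u v w : M -> Prop) : submod u -> submod v -> submod w -> subS u w ->
  subS (mt w (jnM u v)) (jnM u (mt w v)).
Proof.
move=> Hu Hv Hw Huw z [Hz [a [b [Ha [Hb Ez]]]]].
exists a, b; split => //; split => //; split => //.
have -> : b = z - a by rewrite Ez addrC addKr.
by apply sm_B; auto.
Qed.

Lemma RI_comb o (a b c : R -> Prop) : right_ideal a -> right_ideal b -> right_ideal c -> subS a b -> subS b c ->
  devlt (@right_ideal R) a b o -> devlt (@right_ideal R) b c o -> devlt (@right_ideal R) a c o.
Proof.
apply (@devlt_comb R (@right_ideal R) jnR).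
- exact RI_I. - exact RI_J. - exact RI_Jl. - exact RI_Jr. - exact RI_lub. - exact RI_mod.
Qed.
Lemma SM_comb o (a b c : M -> Prop) : submod a -> submod b -> submod c -> subS a b -> subS b c ->
  devlt (@submod R M) a b o -> devlt (@submod R M) b c o -> devlt (@submod R M) a c o.
Proof.
apply (@devlt_comb M (@submod R M) jnM).
- exact SM_I. - exact SM_J. - exact SM_Jl. - exact SM_Jr. - exact SM_lub. - exact SM_mod.
Qed.

End RingLat.
Unset Implicit Arguments.
Set Strict Implicit.

Section Main.
Variables (R : nzRingType) (p : R -> Prop) (M : lmodType R^c).
Hypothesis Hnoeth : noetherian R.
Hypothesis Hp : prime_ideal p.
Hypothesis HpR : kdim_eq (@right_ideal R) p (@fullS R) (@right_ideal R) (@zeroS R) (@fullS R).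
Hypothesis Hcrit : critical M.
Hypothesis HMR : kdim_eq (@submod R M) (@zeroM R M) (@fullS M)
          (@right_ideal R) (@zeroS R) (@fullS R).
Hypothesis Hass : forall q, assoc_prime M q <-> eqS q p.

Notation Ia := (ann (@fullS M)).
Notation RI := (@right_ideal R).
Notation SM := (@submod R M).

Lemma submod_zero : SM (@zeroM R M).
Proof.
split; [reflexivity|split].
- move=> x y -> ->; rewrite /zeroM subr0 //.
- move=> x r ->; apply ract_0r.
Qed.
Lemma submod_full : SM (@fullS M).
Proof. split; [exact I|split]; move=> *; exact I. Qed.
Lemma ri_zero : RI (@zeroS R).
Proof.
split; [split|].
- reflexivity.
- move=> x y -> ->; rewrite /zeroS subr0 //.
- move=> x r ->; rewrite /zeroS mul0r //.
Qed.
Lemma ri_full : RI (@fullS R).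
Proof. split; [split|]; [exact I| |]; move=> *; exact I. Qed.

Lemma M_nz : exists m : M, m <> 0.
Proof.
have [_ [N [[_ [x [_ Hx]]] _]]] := proj2 (Hass p) (fun x => conj id id).
by exists x.
Qed.

Lemma not_devM_OZ : ~ devlt SM (@zeroM R M) (@fullS M) OZ.
Proof. move=> H; have [m Hm] := M_nz; apply Hm; apply (H m I). Qed.

Lemma R_nontriv : ~ subS (@fullS R) (@zeroS R).
Proof. move=> H; have := H 1 I; rewrite /zeroS; apply/eqP; exact: oner_neq0. Qed.

Lemma I_ideal : ideal Ia.
Proof.
split; split; [split| |split|].
- move=> m _; apply ract_r0.
- move=> x y Hx Hy m Hm; rewrite ract_rB Hx // Hy // subr0 //.
- move=> x r Hx m Hm; rewrite -ract_mul Hx // ract_0r //.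
- move=> m _; apply ract_r0.
- move=> x y Hx Hy m Hm; rewrite ract_rB Hx // Hy // subr0 //.
- move=> x r Hx m Hm; rewrite -ract_mul Hx //.
Qed.
Lemma I_ri : RI Ia.
Proof. exact: (proj1 I_ideal). Qed.

Lemma I_sub_p : subS Ia p.
Proof.
have [_ [N [_ [HN _]]]] := proj2 (Hass p) (fun x => conj id id).
move=> r Hr; apply HN => m _; apply Hr; exact I.
Qed.

Lemma p_ri : RI p.
Proof. by case: Hp => [[H _] _]. Qed.

Lemma devR_to_M o : devlt RI (@zeroS R) (@fullS R) o -> devlt SM (@zeroM R M) (@fullS M) o.
Proof. exact: (proj1 HMR o). Qed.
Lemma devM_to_R o : devlt SM (@zeroM R M) (@fullS M) o -> devlt RI (@zeroS R) (@fullS R) o.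
Proof. exact: (proj2 HMR o). Qed.
Lemma devp_to_R o : devlt RI p (@fullS R) o -> devlt RI (@zeroS R) (@fullS R) o.
Proof. exact: (proj2 HpR o). Qed.
Lemma devI_to_R o : devlt RI Ia (@fullS R) o -> devlt RI (@zeroS R) (@fullS R) o.
Proof.
move=> H; apply devp_to_R; apply: (devlt_sub _ _ _ _ _ _ _ H) => //; exact I_sub_p.
Qed.
Lemma devR_to_I o : devlt RI (@zeroS R) (@fullS R) o -> devlt RI Ia (@fullS R) o.
Proof.
move=> H; apply: (devlt_sub _ _ _ _ _ _ _ H) => // x ->; apply (ri_0 I_ri).
Qed.

Lemma big (N : M -> Prop) o : nonzero_submod N -> devlt SM (@zeroM R M) N o ->
  devlt SM (@zeroM R M) (@fullS M) o.
Proof.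
move=> HN H. have [oc [Hc1 Hc2]] := Hcrit N HN.
have SN := proj1 HN.
case: (ord_tot o oc) => [[Hle|Hlt] _].
- exfalso; apply Hc2. refine (SM_comb submod_zero SN submod_full _ _ _ Hc1).
  + move=> x ->; exact (sm_0 SN).
  + move=> x _; exact I.
  + eapply devlt_mono; eauto.
- refine (SM_comb submod_zero SN submod_full _ _ H _).
  + move=> x ->; exact (sm_0 SN).
  + move=> x _; exact I.
  + eapply devlt_mono_lt; eauto.
Qed.

Definition smallR (b a : R -> Prop) :=
  exists o, devlt RI b a o /\ ~ devlt SM (@zeroM R M) (@fullS M) o.

Lemma small_comb a b c : RI a -> RI b -> RI c -> subS a b -> subS b c ->
  smallR a b -> smallR b c -> smallR a c.
Proof.
move=> Ra Rb Rc Hab Hbc [o1 [H1 N1]] [o2 [H2 N2]].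
case: (ord_tot o1 o2) => [[Hle|Hlt] _].
- exists o2; split => //. refine (RI_comb Ra Rb Rc Hab Hbc _ H2). eapply devlt_mono; eauto.
- exists o1; split => //. refine (RI_comb Ra Rb Rc Hab Hbc H1 _). eapply devlt_mono_lt; eauto.
Qed.

Definition img (x : M) (K : R -> Prop) : M -> Prop := fun z => exists k, K k /\ z = ract x k.
Definition pre (x : M) (K : R -> Prop) (N : M -> Prop) : R -> Prop := fun r => K r /\ N (ract x r).

Lemma img_sm x K : RI K -> SM (img x K).
Proof.
move=> HK; split; [|split].
- exists 0; split; [exact (ri_0 HK)| by rewrite ract_r0].
- move=> a b [k [Hk ->]] [k' [Hk' ->]]; exists (k - k'); split; [exact: ri_B| by rewrite ract_rB].
- move=> a r [k [Hk ->]]; exists (k * r); split; [exact: ri_M| by rewrite ract_mul].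
Qed.

Lemma pre_ri x K N : RI K -> SM N -> RI (pre x K N).
Proof.
move=> HK HN; split; [split|].
- split; [exact (ri_0 HK)| rewrite ract_r0; exact (sm_0 HN)].
- move=> a b [? ?] [? ?]; split; [exact: ri_B| rewrite ract_rB; exact: sm_B].
- move=> a r [? ?]; split; [exact: ri_M| rewrite -ract_mul; exact: sm_M].
Qed.

Lemma embed_img x K lo o : RI K -> subS lo (pre x K (@zeroM R M)) ->
  devlt RI lo K o -> devlt SM (@zeroM R M) (img x K) o.
Proof.
move=> HK Hlo H.
apply: (@devlt_embed M R SM RI (pre x K) (@zeroM R M) (img x K)).
- move=> N SN _ _; exact: pre_ri.
- move=> N1 N2 _ _ _ _ _ _ H12 r [Hr1 Hr2]; split => //; auto.
- move=> N1 N2 _ _ _ Hh1 _ _ H12 z Hz. case: (Hh1 z Hz) => [k [Hk Ez]].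
  have : pre x K N2 k by apply H12; split => //; rewrite -Ez.
  by move=> [_ ?]; rewrite Ez.
- exact: img_sm.
- exact submod_zero.
- move=> z Hz; exact Hz.
- move=> z ->; exact (sm_0 (img_sm x K HK)).
- move=> z Hz; exact Hz.
- apply: (devlt_sub _ _ _ _ _ _ _ H) => //. move=> r [Hr _]; exact Hr.
Qed.

Lemma acc_max (P : (R -> Prop) -> Prop) : (forall x, P x -> RI x) -> (exists x, P x) ->
  exists x, P x /\ forall y, P y -> subS x y -> subS y x.
Proof.
move=> HP [x0 Hx0]. apply NNPP => Hn.
have Hstep : forall x, P x -> exists y, P y /\ subS x y /\ ~ subS y x.
{ move=> x Hx. apply NNPP => Hy. apply Hn. exists x; split => //. move=> y Py Hxy.
  apply NNPP => Hyx. apply Hy. exists y. split => //. }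
pose S := {x | P x}.
have g : forall s : S, {y : S | subS (proj1_sig s) (proj1_sig y) /\ ~ subS (proj1_sig y) (proj1_sig s)}.
{ move=> [x Px]. have [y Hy] := constructive_indefinite_description _ (Hstep x Px).
  exists (exist _ y (proj1 Hy)). exact (proj2 Hy). }
pose f := fun s => proj1_sig (g s).
pose s0 : S := exist _ x0 Hx0.
pose c := fun n => proj1_sig (iter n f s0).
have [n Hn'] := (proj1 Hnoeth) c (fun i => HP _ (proj2_sig (iter i f s0)))
   (fun i => proj1 (proj2_sig (g (iter i f s0)))).
apply (proj2 (proj2_sig (g (iter n f s0)))). apply (Hn' n.+1). exact: leqnSn.
Qed.

Lemma exists_dev : exists o, devlt RI (@zeroS R) (@fullS R) o.
Proof.
apply NNPP => Hno.
have [b [[Rb Bb] Hmax]] := @acc_max (fun b => RI b /\ forall o, ~ devlt RI b (@fullS R) o)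
  (fun x H => proj1 H) (ex_intro _ (@zeroS R) (conj ri_zero (fun o H => Hno (ex_intro _ o H)))).
pose J := {b' : R -> Prop | RI b' /\ subS b b' /\ ~ subS b' b}.
have Hex : forall j : J, exists o, devlt RI (proj1_sig j) (@fullS R) o.
{ move=> [b' [Rb' [Hbb' Hnb']]] /=. apply NNPP => H. apply Hnb'. apply (Hmax b'); [|exact Hbb'].
  split; [exact Rb'|]. move=> o Ho; apply H; exists o; exact Ho. }
pose fo := fun j : J => proj1_sig (constructive_indefinite_description _ (Hex j)).
have Hfo : forall j, devlt RI (proj1_sig j) (@fullS R) (fo j) :=
  fun j => proj2_sig (constructive_indefinite_description _ (Hex j)).
apply (Bb (OS (OL fo))). right. move=> c Hc.
have Hmon : forall j i, (j <= i)%N -> subS (c i) (c j).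
{ move=> j i /subnKC <-. elim: (i - j)%N => [|k IH].
  - rewrite addn0 => z Hz; exact Hz.
  - rewrite addnS => z Hz; apply IH; exact (proj2 (proj2 (proj2 (Hc _))) z Hz). }
case: (classic (exists j, subS (c j) b)) => [[j Hj]|Hnj].
- exists j => i Hij. left. move=> z Hz. apply (proj1 (proj2 (Hc i.+1))). apply Hj.
  apply (Hmon j i Hij). exact Hz.
- exists 0%N => i _. right.
  have Hj : RI (c i.+1) /\ subS b (c i.+1) /\ ~ subS (c i.+1) b :=
    conj (proj1 (Hc i.+1)) (conj (proj1 (proj2 (Hc i.+1))) (fun H => Hnj (ex_intro _ i.+1 H))).
  exists (exist _ (c i.+1) Hj).
  refine (devlt_sub _ _ _ _ _ _ _ (Hfo (exist _ (c i.+1) Hj)) _ _).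
  + move=> z Hz; exact Hz.
  + move=> z _; exact I.
Qed.

Lemma chain_principle o : devlt RI (@zeroS R) (@fullS R) o ->
  forall c, dchain RI (@zeroS R) (@fullS R) c ->
  (forall k o', devlt RI (c k.+1) (c k) o' -> devlt RI (@zeroS R) (@fullS R) o') -> False.
Proof.
elim: o => [|o IH|J f IH] H c Hc Hbig.
- apply R_nontriv; exact H.
- case: H => [H|H]; [exact: R_nontriv H|]. have [n Hn] := H c Hc.
  exact: (IH (Hbig _ _ (Hn n (leqnn n))) c Hc Hbig).
- case: H => [H|[j H]]; [exact: R_nontriv H|]. exact: (IH j H c Hc Hbig).
Qed.

Definition ann1 (x : M) : R -> Prop := fun r => ract x r = 0.
Lemma ann1_ri x : RI (ann1 x).
Proof.
split; [split|].
- exact: ract_r0.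
- move=> a b Ha Hb; rewrite /ann1 ract_rB Ha Hb subr0 //.
- move=> a r Ha; rewrite /ann1 -ract_mul Ha ract_0r //.
Qed.

Fixpoint Bs (xs : list M) (r : R) : Prop :=
  match xs with nil => True | cons x xs' => ract x r = 0 /\ Bs xs' r end.

Lemma Bs_ri xs : RI (Bs xs).
Proof.
elim: xs => [|x xs IH].
- split; [split|]; [exact I| |]; move=> *; exact I.
- exact (RI_I (ann1_ri x) IH).
Qed.

Lemma I_Bs xs : subS Ia (Bs xs).
Proof. elim: xs => [|x xs IH] r Hr //=. split; [apply Hr; exact I| exact: IH]. Qed.

Lemma fin_embed : exists xs, forall r, Ia r <-> Bs xs r.
Proof.
apply NNPP => Hn.
have Hstep : forall xs, exists m : M, exists r, Bs xs r /\ ract m r <> 0.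
{ move=> xs. apply NNPP => H1. apply Hn. exists xs => r; split; [apply I_Bs| move=> Hr m _].
  apply NNPP => Hm. apply H1. exists m, r. split => //. }
pose nx := fun xs => proj1_sig (constructive_indefinite_description _ (Hstep xs)).
have Hnx : forall xs, exists r, Bs xs r /\ ract (nx xs) r <> 0 :=
  fun xs => proj2_sig (constructive_indefinite_description _ (Hstep xs)).
pose X := fix X (n : nat) : list M := match n with O => nil | S k => cons (nx (X k)) (X k) end.
pose c := fun k => Bs (X k).
have [oR HoR] := exists_dev.
apply: (chain_principle oR HoR c).
- move=> i; split; [apply Bs_ri|split; [move=> z ->; apply (ri_0 (Bs_ri _))|]].
  split; [move=> z _; exact I| move=> z [_ Hz]; exact Hz].
- move=> k o' H.
  have Hbig : nonzero_submod (img (nx (X k)) (c k)).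
  { split; [apply img_sm; apply Bs_ri|]. have [r [Hr1 Hr2]] := Hnx (X k).
    exists (ract (nx (X k)) r); split => //. exists r; split => //. }
  apply devM_to_R. apply (big _ _ Hbig).
  refine (embed_img (nx (X k)) (c k) (c k.+1) o' (Bs_ri _) _ H).
  move=> z [Hz1 Hz2]; split => //.
Qed.

Lemma find_coord (A : R -> Prop) : forall ys K, RI K -> subS A K -> subS A (Bs ys) ->
  subS (mt K (Bs ys)) A -> ~ subS K A ->
  exists K' x, List.In x ys /\ RI K' /\ subS A K' /\ subS K' K /\ ~ subS K' A /\
    subS (mt K' (ann1 x)) A.
Proof.
elim => [|y ys IH] K RK HAK HAB HKB HnKA.
- exfalso; apply HnKA => z Hz; apply HKB; split => //.
- case: (classic (subS (mt K (ann1 y)) A)) => Hy.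
  + exists K, y; split; [left; reflexivity|].
    split; [exact RK|split; [exact HAK|split; [move=> z Hz; exact Hz|split; [exact HnKA|exact Hy]]]].
  + have RK2 := RI_I RK (ann1_ri y).
    have [K' [x [Hin [R' [H1 [H2 [H3 H4]]]]]]] := IH (mt K (ann1 y)) RK2
      (fun z Hz => conj (HAK z Hz) (proj1 (HAB z Hz))) (fun z Hz => proj2 (HAB z Hz))
      (fun z Hz => HKB z (conj (proj1 (proj1 Hz)) (conj (proj2 (proj1 Hz)) (proj2 Hz)))) Hy.
    exists K', x; split; [right; exact Hin|].
    split; [exact R'|split; [exact H1|split; [move=> z Hz; exact (proj1 (H2 z Hz))|split; [exact H3|exact H4]]]].
Qed.

Lemma Bs_app ys zs x r : Bs (List.app ys (x :: zs)) r <-> ract x r = 0 /\ Bs (List.app ys zs) r.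
Proof.
elim: ys => [|y ys IH] /=; [tauto|]. rewrite IH. tauto.
Qed.

Lemma len_app (ys zs : list M) x : List.length (List.app ys (x :: zs)) = (List.length (List.app ys zs)).+1.
Proof. elim: ys => [|y ys IH] //=. by rewrite IH. Qed.

Lemma Bs_In xs x r : Bs xs r -> List.In x xs -> ract x r = 0.
Proof.
elim: xs => [|y xs IH] //= [H1 H2] [E|Hin]; [by rewrite -E| exact: IH].
Qed.

Lemma claim n : forall xs, (List.length xs <= n)%N ->
  forall A V E, RI A -> RI V -> RI E -> (forall r, A r <-> V r /\ Bs xs r) ->
  subS A E -> subS E V ->
  (forall K, RI K -> subS A K -> subS K V -> ~ subS K A -> ~ subS (mt K E) A) ->
  smallR E V.
Proof.
elim: n => [|n IH] xs Hlen A V E RA RV RE HA HAE HEV Hess;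
  (case: (classic (subS V A)) => HVA;
   [exists OZ; split; [move=> z Hz; apply HAE; apply HVA; exact Hz| exact not_devM_OZ]|]);
  (have [K' [x [Hin [RK' [HAK' [HK'V [HnK'A Hinj]]]]]]] :=
    @find_coord A xs V RV (fun z Hz => proj1 (proj1 (HA z) Hz))
      (fun z Hz => proj2 (proj1 (HA z) Hz)) (fun z Hz => proj2 (HA z) Hz) HVA).
- destruct xs as [|y xs]; [destruct Hin| done].
- have [ys [zs Exs]] := List.in_split x xs Hin.
  rewrite Exs in HA Hlen.
  pose W := mt V (ann1 x).
  have RW : RI W := RI_I RV (ann1_ri x).
  have small1 : smallR (mt E W) W.
  { apply: (IH (List.app ys zs)).
    - by move: Hlen; rewrite len_app.
    - exact RA.
    - exact RW.
    - exact (RI_I RE RW).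
    - move=> r; rewrite (HA r) Bs_app. rewrite /W /mt /ann1. tauto.
    - move=> z Hz. have [H1 H2] := proj1 (HA z) Hz. have [H3 _] := proj1 (Bs_app _ _ _ _) H2.
      split; [exact: HAE|split => //].
    - move=> z [_ Hz]; exact Hz.
    - move=> K RK HAK HKW HnKA HKEW. apply: (Hess K RK HAK _ HnKA).
      + move=> z Hz; exact (proj1 (HKW z Hz)).
      + move=> z [Hz1 Hz2]. apply HKEW. split => //. split => //. exact: HKW. }
  pose EW := jnR E W.
  have REW : RI EW := RI_J RE RW.
  have HE_EW : subS E EW := @RI_Jl R E W RW.
  have HEW_V : subS EW V.
  { apply RI_lub => //. move=> z [Hz _]; exact Hz. }
  have small2 : smallR E EW.
  { case: small1 => o [H1 H2]. exists o; split => //.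
    refine (@devlt_embed R R RI RI (fun K => mt K W) E EW _ _ _ o EW E REW RE
              (fun z Hz => Hz) HE_EW (fun z Hz => Hz) _).
    - move=> K RK _ _; exact (RI_I RK RW).
    - move=> K1 K2 _ _ _ _ _ _ H12 z [Hz1 Hz2]; split => //; auto.
    - move=> K1 K2 RK1 RK2 HEK1 HK1 HEK2 HK2 H12 z Hz.
      case: (HK1 z Hz) => [u [v [Hu [Hv Ez]]]].
      have Hv1 : K1 v.
      { have -> : v = z - u by rewrite Ez addrC addKr.
        apply: ri_B => //. exact: HEK1. }
      have Hv2 : K2 v := proj1 (H12 v (conj Hv1 Hv)).
      rewrite Ez. apply: ri_add => //. exact: HEK2.
    - refine (devlt_sub _ _ _ _ _ _ _ H1 _ _).
      + move=> z Hz; exact Hz.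
      + move=> z [_ Hz]; exact Hz. }
  have small3 : smallR EW V.
  { have Hnz : nonzero_submod (img x E).
    { split; [exact: img_sm|].
      have Hn := Hess K' RK' HAK' HK'V HnK'A.
      have [e He] : exists e, ~ (mt K' E e -> A e).
      { apply NNPP => Hne. apply Hn => z Hz. apply NNPP => HnA. apply Hne. exists z => H; exact (HnA (H Hz)). }
      have He1 : mt K' E e by apply NNPP => H; apply He => H'; exfalso; exact (H H').
      have He2 : ~ A e by move=> H; apply He => _; exact H.
      exists (ract x e); split; [exists e; split => //; exact (proj2 He1)|].
      move=> H0; apply He2; apply Hinj; split; [exact (proj1 He1)| exact H0]. }
    have [oc [Hc1 Hc2]] := Hcrit _ Hnz.
    exists oc; split => //.
    refine (@devlt_embed R M RI SM (img x) EW V _ _ _ oc V EW RV REW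
              (fun z Hz => Hz) HEW_V (fun z Hz => Hz) _).
    - move=> K RK _ _; exact: img_sm.
    - move=> K1 K2 _ _ _ _ _ _ H12 z [k [Hk ->]]; exists k; split => //; auto.
    - move=> K1 K2 RK1 RK2 HEK1 HK1 HEK2 HK2 H12 k Hk.
      have [k' [Hk' Ek]] := H12 (ract x k) (ex_intro _ k (conj Hk erefl)).
      have Hd : K2 (k - k').
      { apply HEK2. apply RI_Jr => //. split; [apply: ri_B => //; auto|].
        by rewrite /ann1 ract_rB Ek subrr. }
      have -> : k = (k - k') + k' by rewrite subrK.
      exact: ri_add.
    - refine (devlt_sub _ _ _ _ _ _ _ Hc1 _ _).
      + move=> z [k [Hk ->]]; exists k; split => //; auto.
      + move=> z _; exact I. }
  exact: (small_comb _ _ _ RE REW RV HE_EW HEW_V small2 small3).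
Qed.

Lemma right_large_core J : essential_over Ia J -> smallR J (@fullS R).
Proof.
move=> [RJ [HIJ Hess]].
have [xs Hxs] := fin_embed.
apply: (@claim (List.length xs) xs (leqnn _) Ia (@fullS R) J I_ri ri_full RJ).
- move=> r; rewrite (Hxs r). split; [move=> H; split => //| move=> [_ H]; exact H].
- exact HIJ.
- move=> z _; exact I.
- move=> K RK HAK _ HnKA. exact: (Hess K (conj RK (conj HAK HnKA))).
Qed.

Lemma rlarge : right_large_quot Ia.
Proof.
move=> J HJ. have [o [H1 H2]] := right_large_core J HJ.
exists o; split => // H; apply H2; apply devR_to_M; apply devI_to_R; exact H.
Qed.

Lemma homog : right_krull_homogeneous_quot Ia.
Proof.
move=> K [RK [HIK HnKI]]. split => o H.
- refine (devlt_sub _ _ _ _ _ _ _ H _ _); [move=> z Hz; exact Hz| move=> z _; exact I].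
- have [k0 Hk0] : exists k, K k /\ ~ Ia k.
  { apply NNPP => Hn; apply HnKI => z Hz; apply NNPP => Hz'; apply Hn; exists z; split => //. }
  have [m Hm] : exists m : M, ract m k0 <> 0.
  { apply NNPP => Hn; apply (proj2 Hk0) => m _; apply NNPP => Hm; apply Hn; exists m; exact Hm. }
  have Hnz : nonzero_submod (img m K).
  { split; [exact: img_sm|]. exists (ract m k0); split => //; exists k0; split => //; exact (proj1 Hk0). }
  apply devR_to_I. apply devM_to_R. apply (big _ _ Hnz).
  refine (embed_img m K Ia o RK _ H).
  move=> r Hr; split; [exact: HIK| exact: (Hr m I)].
Qed.

Lemma annq_ri N : RI N -> RI (ann_quot Ia N).
Proof.
move=> RN; split; [split|].
- move=> n _; rewrite mulr0; exact (ri_0 I_ri).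
- move=> x y Hx Hy n Hn; rewrite mulrBr; exact (ri_B I_ri (Hx n Hn) (Hy n Hn)).
- move=> x r Hx n Hn; rewrite mulrA; exact (ri_M _ I_ri (Hx n Hn)).
Qed.

Lemma Ia_left x r : Ia x -> Ia (r * x).
Proof. exact: (proj2 (proj2 I_ideal)). Qed.

Lemma assoc_exists K : RI K -> subS Ia K -> ~ subS K Ia ->
  exists N, nz_right_ideal_over Ia N /\ subS N K /\ prime_ideal (ann_quot Ia N) /\
   (forall N', nz_right_ideal_over Ia N' -> subS N' N -> eqS (ann_quot Ia N') (ann_quot Ia N)).
Proof.
move=> RK HIK HnKI.
have [q [[Rq [N [HN [HNK Heq]]]] Hmax]] :=
  @acc_max (fun q => RI q /\ exists N, nz_right_ideal_over Ia N /\ subS N K /\ eqS (ann_quot Ia N) q)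
   (fun x H => proj1 H) (ex_intro _ (ann_quot Ia K)
      (conj (annq_ri K RK) (ex_intro _ K (conj (conj RK (conj HIK HnKI)) (conj (fun z Hz => Hz) (fun z => conj id id)))))).
have [RN [HIN HnNI]] := HN.
have Hsub : forall N', nz_right_ideal_over Ia N' -> subS N' N -> eqS (ann_quot Ia N') (ann_quot Ia N).
{ move=> N' HN' HN'N r. split.
  - move=> Hr. apply (proj2 (Heq r)). apply (Hmax (ann_quot Ia N')).
    + split; [exact (annq_ri _ (proj1 HN'))|]. exists N'. split; [exact HN'|split].
      * move=> z Hz; apply HNK; apply HN'N; exact Hz.
      * move=> z; split; move=> H; exact H.
    + move=> z Hz. apply (proj2 (Heq z)) in Hz. move=> n Hn; apply Hz; apply HN'N; exact Hn.
    + exact Hr.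
  - move=> Hr n Hn; apply Hr; apply HN'N; exact Hn. }
exists N; split => //; split => //; split => //.
split; [|split].
- split; [exact (annq_ri N RN)|]. split; [split|].
  + move=> n _; rewrite mulr0; exact (ri_0 I_ri).
  + move=> x y Hx Hy n Hn; rewrite mulrBr; apply: (ri_B I_ri); auto.
  + move=> x r Hx n Hn; rewrite mulrA; apply Hx; apply: ri_M => //.
- move=> H1; apply HnNI => n Hn; have := H1 n Hn; by rewrite mulr1.
- move=> A B HA HB HAB. case: (classic (subS A (ann_quot Ia N))) => HAQ; [left; exact HAQ|right].
  have [a [Ha Hna]] : exists a, A a /\ ~ ann_quot Ia N a.
  { apply NNPP => Hn; apply HAQ => z Hz; apply NNPP => Hz'; apply Hn; exists z; split => //. }
  have [n [Hn Hnna]] : exists n, N n /\ ~ Ia (n * a).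
  { apply NNPP => Hn'; apply Hna => n Hn; apply NNPP => H; apply Hn'; exists n; split => //. }
  pose N' := fun z => exists r i, Ia i /\ z = n * a * r + i.
  have RN' : RI N'.
  { split; [split|].
    - exists 0, 0; split; [exact (ri_0 I_ri)| by rewrite mulr0 addr0].
    - move=> x y [r [i [Hi ->]]] [r' [i' [Hi' ->]]]. exists (r - r'), (i - i').
      split; [apply: (ri_B I_ri) => //|]. by rewrite mulrBr opprD addrACA.
    - move=> x s [r [i [Hi ->]]]. exists (r * s), (i * s).
      split; [apply: (ri_M _ I_ri) => //|]. by rewrite mulrDl mulrA. }
  have HN' : nz_right_ideal_over Ia N'.
  { split => //. split.
    - move=> i Hi; exists 0, i; split => //; by rewrite mulr0 add0r.
    - move=> H; apply Hnna. have := H (n * a * 1 + 0) (ex_intro _ 1 (ex_intro _ 0 (conj (ri_0 I_ri) erefl))).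
      by rewrite mulr1 addr0. }
  have HN'N : subS N' N.
  { move=> z [r [i [Hi ->]]]. apply: ri_add => //.
    - apply: ri_M => //; apply: ri_M => //.
    - exact: HIN. }
  move=> b Hb. apply (proj1 (Hsub N' HN' HN'N b)).
  move=> z [r [i [Hi ->]]].
  have -> : (n * a * r + i) * b = n * (a * r * b) + i * b by rewrite mulrDl !mulrA.
  apply: (ri_add I_ri); [|apply: (ri_M _ I_ri) => //].
  apply (HAB (a * r) b) => //. apply: (proj2 (proj1 HA)) => //.
Qed.

Lemma assoc_to_p N q : nz_right_ideal_over Ia N -> prime_ideal q ->
  (forall N', nz_right_ideal_over Ia N' -> subS N' N -> eqS (ann_quot Ia N') q) -> eqS q p.
Proof.
move=> [RN [HIN HnNI]] Hq HN.
have [xs Hxs] := fin_embed.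
have [K' [x [Hin [RK' [HIK' [HK'N [HnK'I Hinj]]]]]]] :=
  @find_coord Ia xs N RN HIN (fun z Hz => proj1 (Hxs z) Hz)
    (fun z Hz => proj2 (Hxs z) (proj2 Hz)) HnNI.
have HIx : forall r, Ia r -> ract x r = 0.
{ move=> r Hr; exact: (Bs_In _ _ _ (proj1 (Hxs r) Hr) Hin). }
apply Hass. split; [exact Hq|].
have Hgen : forall L', nonzero_submod L' -> subS L' (img x K') -> eqS (ann L') q.
{ move=> L' [SL' [z0 [Hz0 Hz0n]]] HL' r.
  have RN'' := pre_ri x K' L' RK' SL'.
  have HN'' : nz_right_ideal_over Ia (pre x K' L').
  { split => //. split.
    - move=> i Hi; split; [exact: HIK'| rewrite HIx //; exact (sm_0 SL')].
    - move=> H. have [k [Hk Ek]] := HL' z0 Hz0. apply Hz0n. rewrite Ek. apply HIx.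
      apply H; split => //. by rewrite -Ek. }
  have HN''N : subS (pre x K' L') N by move=> z [Hz _]; exact: HK'N.
  rewrite -(HN _ HN'' HN''N r). split.
  - move=> Hr n [Hn1 Hn2]. apply Hinj. split; [exact: ri_M|].
    rewrite /ann1 -ract_mul. exact: Hr.
  - move=> Hr z Hz. have [k [Hk Ek]] := HL' z Hz. rewrite Ek ract_mul.
    apply HIx. apply Hr. split => //. by rewrite -Ek. }
exists (img x K'). split; [|split].
- split; [exact: img_sm|].
  have [k [Hk Hnk]] : exists k, K' k /\ ~ Ia k.
  { apply NNPP => Hn; apply HnK'I => z Hz; apply NNPP => Hz'; apply Hn; exists z; split => //. }
  exists (ract x k); split; [exists k; split => //|].
  move=> H0; apply Hnk; apply Hinj; split => //.
- apply Hgen; [|move=> z Hz; exact Hz].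
  split; [exact: img_sm|].
  have [k [Hk Hnk]] : exists k, K' k /\ ~ Ia k.
  { apply NNPP => Hn; apply HnK'I => z Hz; apply NNPP => Hz'; apply Hn; exists z; split => //. }
  exists (ract x k); split; [exists k; split => //|].
  move=> H0; apply Hnk; apply Hinj; split => //.
- exact Hgen.
Qed.

Lemma eqS_eq (q r : R -> Prop) : eqS q r -> q = r.
Proof.
move=> H; apply: functional_extensionality => x; apply: propositional_extensionality; exact: H.
Qed.

Lemma one_notin_Ia : ~ subS (@fullS R) Ia.
Proof.
move=> H. case: Hp => [_ [H1 _]]. apply H1. apply I_sub_p. apply H; exact I.
Qed.

Lemma main_result :
  subS Ia p /\
  (right_krull_homogeneous_quot Ia /\
   kdim_eq (@right_ideal R) Ia (@fullS R) (@right_ideal R) (@zeroS R) (@fullS R)) /\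
  ((forall q, assoc_quot Ia q <-> eqS q p) /\
   ~ essential_over Ia p /\
   right_large_quot Ia) /\
  (eqS Ia p \/
   exists J, ideal J /\ ~ eqS J p /\ subS Ia J /\ ~ subS J Ia /\
     (forall j x, J j -> p x -> Ia (j * x)) /\
     kdim_lt (@right_ideal R) J (@fullS R) (@right_ideal R) (@zeroS R) (@fullS R)).
Proof.
have Hex := assoc_exists _ ri_full (fun z _ => I) one_notin_Ia.
split; [exact I_sub_p|].
split; [split; [exact homog| split => o; [exact: devR_to_I| exact: devI_to_R]]|].
split; [split; [|split; [|exact rlarge]]|].
- move=> q; split.
  + move=> [Hq [HIq [N [HN [Heq Hall]]]]]. exact: (assoc_to_p _ _ HN Hq Hall).
  + move=> Hqp. have -> := eqS_eq _ _ Hqp.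
    have [N [HN [_ [Hprime Hall]]]] := Hex.
    have HNp := assoc_to_p _ _ HN Hprime Hall.
    split; [exact Hp| split; [exact I_sub_p|]].
    exists N; split => //; split => //.
    move=> N' HN' HN'N r. rewrite (Hall N' HN' HN'N r). exact: HNp.
- move=> Hess. have [o [H1 H2]] := rlarge _ Hess. apply H2. apply devR_to_I. exact: devp_to_R.
- right.
  pose J := fun r => forall x, p x -> Ia (r * x).
  have pleft : forall x r, p x -> p (r * x).
  { case: Hp => [[_ [_ Hl]] _]. exact Hl. }
  have HJ : ideal J.
  { split; split; [split| |split|].
    - move=> x _; rewrite mul0r; exact (ri_0 I_ri).
    - move=> a b Ha Hb x Hx; rewrite mulrBl; exact (ri_B I_ri (Ha x Hx) (Hb x Hx)).
    - move=> a s Ha x Hx; rewrite -mulrA; apply Ha; exact: pleft.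
    - move=> x _; rewrite mul0r; exact (ri_0 I_ri).
    - move=> a b Ha Hb x Hx; rewrite mulrBl; exact (ri_B I_ri (Ha x Hx) (Hb x Hx)).
    - move=> a s Ha x Hx; rewrite -mulrA; apply Ia_left; exact: Ha. }
  have HIJ : subS Ia J.
  { move=> r Hr x _. exact (ri_M _ I_ri Hr). }
  have HessJ : essential_over Ia J.
  { split; [exact (proj1 HJ)| split; [exact HIJ|]].
    move=> K [RK [HIK HnKI]] HKJ.
    have [N [[RN [HIN HnNI]] [HNK [Hprime Hall]]]] := assoc_exists _ RK HIK HnKI.
    have HNp := assoc_to_p _ _ (conj RN (conj HIN HnNI)) Hprime Hall.
    apply HnNI => n Hn. apply HKJ. split; [exact: HNK|].
    move=> x Hx. apply (proj2 (HNp x) Hx). exact Hn. }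
  have [o [H1 H2]] := rlarge _ HessJ.
  exists J; split => //; split; [|split => //; split; [|split => //]].
  + move=> HJp. apply H2. apply devR_to_I. apply devp_to_R.
    refine (devlt_sub _ _ _ _ _ _ _ H1 _ _); [move=> z Hz; exact (proj1 (HJp z) Hz)| move=> z Hz; exact Hz].
  + move=> HJI. apply H2.
    refine (devlt_sub _ _ _ _ _ _ _ H1 _ _); [exact HJI| move=> z Hz; exact Hz].
  + move=> j x Hj Hx; exact (Hj x Hx).
  + exists o; split => // H; apply H2; exact: devR_to_I.
Qed.
End Main.

Theorem proposition2p6 (R : nzRingType) (p : R -> Prop) (M : lmodType R^c) :
  noetherian R ->
  prime_ideal p ->
  kdim_eq (@right_ideal R) p (@fullS R) (@right_ideal R) (@zeroS R) (@fullS R) ->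
  fin_gen M ->
  critical M ->
  kdim_eq (@submod R M) (@zeroM R M) (@fullS M)
          (@right_ideal R) (@zeroS R) (@fullS R) ->
  (forall q, assoc_prime M q <-> eqS q p) ->
  let I := ann (@fullS M) in
  (* (i) *)
  subS I p /\
  (* (ii) *)
  (right_krull_homogeneous_quot I /\
   kdim_eq (@right_ideal R) I (@fullS R) (@right_ideal R) (@zeroS R) (@fullS R)) /\
  (* (iii) *)
  ((forall q, assoc_quot I q <-> eqS q p) /\
   ~ essential_over I p /\
   right_large_quot I) /\
  (* (iv) *)
  (eqS I p \/
   exists J, ideal J /\ ~ eqS J p /\ subS I J /\ ~ subS J I /\
     (forall j x, J j -> p x -> I (j * x)) /\
     kdim_lt (@right_ideal R) J (@fullS R) (@right_ideal R) (@zeroS R) (@fullS R)).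
Proof.
move=> Hn Hp HpR _ Hcrit HMR Hass I.
eapply main_result; eassumption.
Qed.
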